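(* Let $n\ge2$ and $\Delta\subset B_n$ a proper ideal. The face numbers $f_j(\mathrm{Bier}(B_n,\Delta))$, $0\le j\le n-1$, depend only on $n$ and the differences $f_i(\Delta)-f_{n-i}(\Delta)$, $0\le i\le\lfloor\frac{n-1}2\rfloor$.
   Context: $B_n$ is the Boolean lattice of subsets of $[1,n]$. A proper ideal $\Delta\subset B_n$ is a nonempty family of subsets of $[1,n]$ closed under taking subsets with $[1,n]\notin\Delta$; $f_i(\Delta)$ is the number of sets of cardinality $i$ in $\Delta$. The Bier sphere $\mathrm{Bier}(B_n,\Delta)$ is the simplicial complex whose faces are the pairs $(B,C)$ with $B\subsetneq C\subseteq[1,n]$, $B\in\Delta$, $C\notin\Delta$, with $(B',C')$ a face of $(B,C)$ iff $B'\subseteq B$ and $C\subseteq C'$; the face $(B,C)$ has $|B|+n-|C|$ vertices. $f_j(\mathrm{Bier}(B_n,\Delta))$ is its number of faces with $j$ vertices. *)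

(* Defs.v *)
From mathcomp Require Import all_boot all_order all_algebra.
Set Implicit Arguments. Unset Strict Implicit. Unset Printing Implicit Defensive.

(* The Boolean lattice B_n is modelled as {set 'I_n} (ground set [1,n]
   relabelled as {0,...,n-1}). A family Delta : {set {set 'I_n}}. *)

Definition Bn_proper_ideal (n : nat) (Delta : {set {set 'I_n}}) : Prop :=
  [/\ Delta != set0,
      (forall A B : {set 'I_n}, A \subset B -> B \in Delta -> A \in Delta)
    & [set: 'I_n] \notin Delta].

Definition fnum (n : nat) (Delta : {set {set 'I_n}}) (i : nat) : nat :=
  #|[set A in Delta | #|A| == i]|.

Definition bier_faces (n : nat) (Delta : {set {set 'I_n}})
  : {set {set 'I_n} * {set 'I_n}} :=
  [set p : {set 'I_n} * {set 'I_n} | [&& p.1 \proper p.2, p.1 \in Delta & p.2 \notin Delta]].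

Definition bier_nverts (n : nat) (p : {set 'I_n} * {set 'I_n}) : nat :=
  #|p.1| + (n - #|p.2|).

Definition bier_fnum (n : nat) (Delta : {set {set 'I_n}}) (j : nat) : nat :=
  #|[set p in bier_faces Delta | bier_nverts p == j]|.

(* Main.v *)
Require Import Defs.
From mathcomp Require Import all_boot all_order all_algebra zify ring.
Import GRing.Theory.
Section S.
Variable T : finType.

Lemma down_count (A : {set T}) (k : nat) :
  #|[set B : {set T} | B \subset A & #|A| - #|B| == k]| = 'C(#|A|, k).
Proof.
rewrite -cards_draws.
have -> : [set B : {set T} | B \subset A & #|A| - #|B| == k] =
   (fun D => A :\: D) @: [set D : {set T} | D \subset A & #|D| == k].
  apply/setP => B; rewrite inE; apply/andP/imsetP.
  - case=> sBA /eqP hk; exists (A :\: B).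
      rewrite inE subsetDl /= cardsD (setIidPr sBA).
      apply/eqP; have := subset_leq_card sBA; lia.
    by rewrite setDDr setDv set0U (setIidPr sBA).
  - case=> D; rewrite inE => /andP [sDA /eqP hD] ->.
    split; first exact: subsetDl.
    rewrite cardsD (setIidPr sDA); apply/eqP; have := subset_leq_card sDA; lia.
rewrite card_in_imset // => D1 D2; rewrite !inE => /andP[s1 _] /andP[s2 _] e.
have h (D : {set T}) : D \subset A -> A :\: (A :\: D) = D.
  by move=> sDA; rewrite setDDr setDv set0U (setIidPr sDA).
by rewrite -(h _ s1) -(h _ s2) e.
Qed.

Lemma up_count (B : {set T}) (k : nat) :
  #|[set C : {set T} | B \subset C & #|C| - #|B| == k]| = 'C(#|T| - #|B|, k).
Proof.
have eT : #|T| - #|B| = #|~: B| by rewrite -(cardsC B); lia.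
rewrite eT -down_count.
have -> : [set C : {set T} | B \subset C & #|C| - #|B| == k] =
   (@setC T) @: [set C : {set T} | C \subset ~: B & #|~: B| - #|C| == k].
  apply/setP => C; rewrite inE; apply/andP/imsetP.
  - case=> sBC /eqP hk; exists (~: C); last by rewrite setCK.
    rewrite inE setCS sBC /= -eT; apply/eqP.
    have := cardsC C; have := subset_leq_card sBC; have := max_card (mem C).
    move=> *; lia.
  - case=> D; rewrite inE => /andP [sD /eqP hD] ->.
    have sBC : B \subset ~: D by rewrite -setCS setCK.
    split => //; apply/eqP; move: hD; rewrite -eT.
    have := cardsC D; have := subset_leq_card sBC; have := max_card (mem D).
    move=> *; lia.
by rewrite card_imset //; exact: setC_inj.
Qed.

Lemma card_ind (P : pred T) : #|[set x | P x]| = \sum_x (P x : nat).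
Proof.
rewrite -sum1_card big_mkcond /=; apply: eq_bigr => x _; rewrite inE.
by case: (P x).
Qed.

End S.

Lemma arith b c n j : c <= n -> b <= c -> j <= n ->
  (b + (n - c) == j) = (c - b == n - j).
Proof. by move=> *; apply/eqP/eqP => ?; lia. Qed.

Section M.
Variable n : nat.
Notation T := {set 'I_n}.
Variable Delta : {set T}.
Hypothesis ideal : forall A B : T, A \subset B -> B \in Delta -> A \in Delta.

Lemma bier_sum j : j <= n -> bier_fnum Delta j =
  \sum_(B : T) \sum_(C : T)
     ([&& B \in Delta, C \notin Delta, B \subset C & #|C| - #|B| == n - j] : nat).
Proof.
move=> hj; rewrite /bier_fnum.
have -> : [set p in bier_faces Delta | bier_nverts p == j] =
   [set p : T * T | [&& p.1 \in Delta, p.2 \notin Delta, p.1 \subset p.2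
                     & #|p.2| - #|p.1| == n - j]].
  apply/setP => [[B C]]; rewrite !inE /bier_nverts /=.
  case hB: (B \in Delta); case hC: (C \in Delta) => //=; rewrite ?andbF //.
  rewrite properEneq.
  have -> : B != C by apply/eqP => e; move: hB hC; rewrite e => ->.
  case sBC: (B \subset C) => //=.
  have := subset_leq_card sBC; have := subset_leq_card (subsetT C); rewrite cardsT card_ord.
  by move=> h1 h2; apply: arith.
by rewrite card_ind pair_bigA.
Qed.

Lemma left_eq k : \sum_(B : T) \sum_(C : T)
     ([&& B \in Delta, B \subset C & #|C| - #|B| == k] : nat) =
   \sum_(B in Delta) 'C(n - #|B|, k).
Proof.
rewrite [RHS]big_mkcond; apply: eq_bigr => B _.
case: (B \in Delta) => /=; last by rewrite big1.
rewrite -[n in n - _](card_ord n) -up_count card_ind; reflexivity.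
Qed.

Lemma both_eq k : \sum_(B : T) \sum_(C : T)
     ([&& B \in Delta, C \in Delta, B \subset C & #|C| - #|B| == k] : nat) =
   \sum_(C in Delta) 'C(#|C|, k).
Proof.
transitivity (\sum_(B : T) \sum_(C : T)
     ([&& C \in Delta, B \subset C & #|C| - #|B| == k] : nat)).
  apply: eq_bigr => B _; apply: eq_bigr => C _.
  case hC: (C \in Delta); case sBC: (B \subset C); rewrite ?andbF //=.
  by rewrite (ideal _ _ sBC hC).
rewrite exchange_big [RHS]big_mkcond; apply: eq_bigr => C _.
case: (C \in Delta) => /=; last by rewrite big1.
by rewrite -down_count card_ind.
Qed.

Definition gk (k i : nat) : int := (Posz 'C(n - i, k) - Posz 'C(i, k))%R.

Lemma bier_int j : j <= n ->
  Posz (bier_fnum Delta j) = (\sum_(B in Delta) gk (n - j) #|B|)%R.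
Proof.
move=> hj.
have H : bier_fnum Delta j + \sum_(C in Delta) 'C(#|C|, n - j) =
         \sum_(B in Delta) 'C(n - #|B|, n - j).
  rewrite bier_sum // -both_eq -left_eq -big_split; apply: eq_bigr => B _.
  rewrite -big_split; apply: eq_bigr => C _ /=.
  by case: (B \in Delta); case: (C \in Delta); case: (B \subset C);
     case: (_ == _).
have H' : Posz (bier_fnum Delta j) = (Posz (\sum_(B in Delta) 'C(n - #|B|, n - j))
            - Posz (\sum_(C in Delta) 'C(#|C|, n - j)))%R.
  by rewrite -H PoszD addrK.
rewrite H' -!natz !natr_sum -sumrB; apply: eq_bigr => B _.
by rewrite /gk !natz.
Qed.

Lemma sum_by_card (h : nat -> int) :
  (\sum_(B in Delta) h #|B| = \sum_(i < n.+1) Posz (fnum Delta i) * h i)%R.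
Proof.
transitivity (\sum_(i < n.+1) \sum_(B in [set A in Delta | #|A| == i]) h i)%R;
  last by apply: eq_bigr => i _; by rewrite sumr_const -mulr_natl natz.
under [RHS]eq_bigr => i _ do rewrite big_mkcond /=.
rewrite exchange_big big_mkcond /=; apply: eq_bigr => B _.
under eq_bigr => i _ do rewrite inE.
case: (B \in Delta) => /=; last by rewrite big1.
have hB : #|B| < n.+1 by rewrite ltnS -[X in _ <= X](card_ord n) max_card.
rewrite -big_mkcond /= (big_pred1 (Ordinal hB)) // => i /=.
Qed.

Lemma gk_rev k i : i <= n -> gk k (n - i) = (- gk k i)%R.
Proof. by move=> hi; rewrite /gk subKn // opprB. Qed.

Lemma S2 k (D : {set T}) :
  ((\sum_(i < n.+1) Posz (fnum D i) * gk k i) *+ 2 =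
   \sum_(i < n.+1) (Posz (fnum D i) - Posz (fnum D (n - i))) * gk k i)%R.
Proof.
have E : (\sum_(i < n.+1) Posz (fnum D (n - i)) * gk k i =
          - \sum_(i < n.+1) Posz (fnum D i) * gk k i)%R.
  rewrite (reindex_inj rev_ord_inj) /= -sumrN; apply: eq_bigr => i _.
  have hi : (i : nat) <= n by rewrite -ltnS.
  by rewrite /= subSS subKn // gk_rev // mulrN.
under [RHS]eq_bigr => i _ do rewrite mulrBl.
by rewrite sumrB E opprK mulr2n.
Qed.

End M.

Lemma S_eq n (D : {set {set 'I_n}}) (j : nat) :
  Bn_proper_ideal D -> j <= n ->
  Posz (bier_fnum D j) = (\sum_(i < n.+1) Posz (fnum D i) * gk n (n - j) i)%R.
Proof.
case=> _ id _ hj; rewrite (@bier_int n D id j hj); exact: sum_by_card.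
Qed.

Theorem corollary10 (n : nat) (Delta1 Delta2 : {set {set 'I_n}}) :
  2 <= n ->
  Bn_proper_ideal Delta1 -> Bn_proper_ideal Delta2 ->
  (forall i : nat, i <= (n.-1)./2 ->
     ((fnum Delta1 i)%:Z - (fnum Delta1 (n - i))%:Z =
      (fnum Delta2 i)%:Z - (fnum Delta2 (n - i))%:Z)%R) ->
  forall j : nat, j <= n.-1 -> bier_fnum Delta1 j = bier_fnum Delta2 j.
Proof.
move=> hn h1 h2 H j hj.
have hjn : j <= n by lia.
suff : Posz (bier_fnum Delta1 j) = Posz (bier_fnum Delta2 j) by case.
rewrite (@S_eq n Delta1 j h1 hjn) (@S_eq n Delta2 j h2 hjn).
match goal with |- ?a = ?b => suff : (a *+ 2 = b *+ 2)%R by lia end.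
rewrite !S2; apply: eq_bigr => i _; congr (_ * _)%R.
have hi : (i : nat) <= n by rewrite -ltnS.
have [le1|lt1] := leqP i (n.-1)./2; first exact: H.
have [le2|lt2] := leqP (n - i) (n.-1)./2.
  have := H _ le2; rewrite subKn //; lia.
have -> : n - i = i by lia.
by rewrite !subrr.
Qed.
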